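(* Let $X$ be a set and $\{d_r\colon X\times X\to\mathbb{R}_{\ge0}\cup\{\infty\}\}_{r>0}$ a family satisfying the weaker $\{d_r\}$-axioms (see context). For $r,\varepsilon>0$ set $U_r^\varepsilon=\{(x,y)\in X\times X\mid d_r(x,y)<\varepsilon\}$, and call $U\subset X\times X$ an entourage if $U_r^\varepsilon\subset U$ for some $r>0,\varepsilon>0$. Then the collection $\mathcal U$ of all entourages is a quasi-uniformity on $X$. Moreover, if $d_r(x,y)=d_r(y,x)$ for all $x,y\in X$ and $r>0$, then $\mathcal U$ is a uniformity.
   Context: The weaker $\{d_r\}$-axioms, required for all $x,y,z\in X$: (Self-distance) $d_r(x,x)=0$ for all $r>0$. (Upper semi-continuity) if $r_1\le r_2$ then $d_{r_1}(x,y)\le d_{r_2}(x,y)$; and if $d_r(x,y)<\varepsilon$ there is $\delta>0$ with $d_{r+\delta}(x,y)<\varepsilon$. (Weaker triangle inequality) for $r_1,r_2,r_3>0$, if $d_{r_1+r_2+r_3}(x,y)<r_3$ and $d_{r_1+r_2+r_3}(y,z)<r_2$, then $d_{r_1}(x,z)\le d_{r_1+r_2+r_3}(x,y)+d_{r_1+r_2+r_3}(y,z)$. A quasi-uniformity on $X$ is a collection $\mathcal U$ of subsets of $X\times X$ such that: supersets of members are members; it is closed under finite intersections; every member contains the diagonal; for each $U\in\mathcal U$ there is $V\in\mathcal U$ with $V\circ V\subset U$, where $U\circ V=\{(x,z)\mid \exists y,\ (x,y)\in U,(y,z)\in V\}$. It is a uniformity if additionally $U\in\mathcal U$ implies $U^{-1}=\{(y,x)\mid(x,y)\in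 U\}\in\mathcal U$. *)

(* Defs.v *)
From Stdlib Require Import Reals.
From Coquelicot Require Import Rbar.
Open Scope R_scope.

(* A family {d_r}_{r>0} of maps X*X -> [0, +oo]; d r is only meaningful for r > 0. *)
Definition dfamily (X : Type) := R -> X -> X -> Rbar.

Definition nonneg_family {X : Type} (d : dfamily X) : Prop :=
  forall r, 0 < r -> forall x y, Rbar_le (Finite 0) (d r x y).

Definition weaker_dr_axioms {X : Type} (d : dfamily X) : Prop :=
  (forall r, 0 < r -> forall x, d r x x = Finite 0) /\
  (forall r1 r2, 0 < r1 -> r1 <= r2 -> forall x y, Rbar_le (d r1 x y) (d r2 x y)) /\
  (forall r eps, 0 < r -> forall x y, Rbar_lt (d r x y) (Finite eps) ->
     exists delta, 0 < delta /\ Rbar_lt (d (r + delta) x y) (Finite eps)) /\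
  (forall r1 r2 r3, 0 < r1 -> 0 < r2 -> 0 < r3 -> forall x y z,
     Rbar_lt (d (r1 + r2 + r3) x y) (Finite r3) ->
     Rbar_lt (d (r1 + r2 + r3) y z) (Finite r2) ->
     Rbar_le (d r1 x z) (Rbar_plus (d (r1 + r2 + r3) x y) (d (r1 + r2 + r3) y z))).

Definition rel (X : Type) := X -> X -> Prop.

Definition rel_sub {X : Type} (U V : rel X) : Prop := forall x y, U x y -> V x y.
Definition rel_inter {X : Type} (U V : rel X) : rel X := fun x y => U x y /\ V x y.
Definition rel_comp {X : Type} (U V : rel X) : rel X :=
  fun x z => exists y, U x y /\ V y z.
Definition rel_inv {X : Type} (U : rel X) : rel X := fun x y => U y x.

Definition is_quasi_uniformity {X : Type} (UU : rel X -> Prop) : Prop :=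
  (forall U V, UU U -> rel_sub U V -> UU V) /\
  (forall U V, UU U -> UU V -> UU (rel_inter U V)) /\
  (forall U, UU U -> forall x, U x x) /\
  (forall U, UU U -> exists V, UU V /\ rel_sub (rel_comp V V) U).

Definition is_uniformity {X : Type} (UU : rel X -> Prop) : Prop :=
  is_quasi_uniformity UU /\ (forall U, UU U -> UU (rel_inv U)).

Definition Ure {X : Type} (d : dfamily X) (r eps : R) : rel X :=
  fun x y => Rbar_lt (d r x y) (Finite eps).

Definition entourage {X : Type} (d : dfamily X) (U : rel X) : Prop :=
  exists r eps, 0 < r /\ 0 < eps /\ rel_sub (Ure d r eps) U.

(* Main.v *)
Require Import Defs.
From Stdlib Require Import Reals Lra.
From Coquelicot Require Import Rbar.
Open Scope R_scope.

Lemma plus_lt_aux (a b c : Rbar) (s e : R) :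
  Rbar_le a (Rbar_plus b c) -> Rbar_lt b (Finite s) -> Rbar_lt c (Finite s) ->
  2 * s <= e -> Rbar_lt a (Finite e).
Proof.
  intros H Hb Hc He.
  apply Rbar_le_lt_trans with (1 := H).
  destruct b as [b| |]; destruct c as [c| |]; simpl in *; try tauto; lra.
Qed.

Theorem proposition4p6 (X : Type) (d : dfamily X) :
  nonneg_family d -> weaker_dr_axioms d ->
  is_quasi_uniformity (entourage d) /\
  ((forall r, 0 < r -> forall x y, d r x y = d r y x) -> is_uniformity (entourage d)).
Proof.
  intros _ [Hself [Hmono [_ Htri]]].
  assert (Q : is_quasi_uniformity (entourage d)).
  { split; [|split; [|split]].
    - intros U V [r [e [Hr [He HU]]]] HUV. exists r, e. repeat split; auto.
      intros x y H. apply HUV, HU, H.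
    - intros U V [r1 [e1 [Hr1 [He1 HU]]]] [r2 [e2 [Hr2 [He2 HV]]]].
      exists (Rmax r1 r2), (Rmin e1 e2).
      split; [apply Rmax_case; lra|]. split; [apply Rmin_case; lra|].
      intros x y H. unfold Ure in H. split.
      + apply HU. unfold Ure.
        apply Rbar_le_lt_trans with (d (Rmax r1 r2) x y).
        * apply Hmono; [lra | apply Rmax_l].
        * apply Rbar_lt_le_trans with (1 := H). simpl. apply Rmin_l.
      + apply HV. unfold Ure.
        apply Rbar_le_lt_trans with (d (Rmax r1 r2) x y).
        * apply Hmono; [lra | apply Rmax_r].
        * apply Rbar_lt_le_trans with (1 := H). simpl. apply Rmin_r.
    - intros U [r [e [Hr [He0 HU]]]] x. apply HU. unfold Ure. rewrite (Hself r Hr). simpl. exact He0.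

    - intros U [r [e [Hr [He HU]]]].
      set (s := e / 3).
      exists (Ure d (r + s + s) s). split.
      + exists (r + s + s), s. unfold s. repeat split; try lra.
        intros x y H; exact H.
      + intros x z [y [H1 H2]]. apply HU. unfold Ure in *.
        apply plus_lt_aux with (d (r + s + s) x y) (d (r + s + s) y z) s; auto.
        * apply Htri; unfold s; auto; lra.
        * unfold s; lra. }
  split; [exact Q|].
  intros Hsym. split; [exact Q|].
  intros U [r [e [Hr [He HU]]]]. exists r, e. repeat split; auto.
  intros x y H. unfold rel_inv. apply HU. unfold Ure in *. rewrite Hsym; auto.
Qed.
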